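(* Fix revenues $r_i\in[0,1]$ ($i=1,\dots,N$) and penalty $c\in[0,1]$. Let $\mathbf{v},\mathbf{w}\in[0,1]^N$ and $q_v,q_w\in[0,1]$, and let $\mathbf{S}_v^*\in\arg\max_{\mathbf{S}}\mathbb{E}[U(\mathbf{S};\mathbf{v},q_v)]$. Then $$\big|\mathbb{E}[U(\mathbf{S}_v^*;\mathbf{v},q_v)]-\mathbb{E}[U(\mathbf{S}_v^*;\mathbf{w},q_w)]\big|\le\sum_{i\in\mathbf{S}_v^*}\big(2|v_i-w_i|+(N+1)|q_v-q_w|\big).$$
   Context: A sequence $\mathbf{S}=(S_1,\dots,S_m)$ consists of distinct items from $\{1,\dots,N\}$; $I(k)$ denotes the item at position $k$, and the maximum is over all such sequences. For $\mathbf{u}\in[0,1]^N$ and $q\in[0,1]$, $$\mathbb{E}[U(\mathbf{S};\mathbf{u},q)]=\sum_{l=1}^{m} r_{I(l)}u_{I(l)}\,q^{l-1}\prod_{k=1}^{l-1}(1-u_{I(k)})\;-\;c\sum_{k=1}^{m}q^{k-1}(1-q)\prod_{j=1}^{k}(1-u_{I(j)}).$$ (This is the expected payoff when a user scans the sequence, selects item $i$ with probability $u_i$ earning $r_i$, and otherwise abandons with probability $1-q$ at penalty $c$ or continues with probability $q$.) *)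

(* Defs.v *)
From mathcomp Require Import all_boot all_order all_algebra.
Set Implicit Arguments. Unset Strict Implicit. Unset Printing Implicit Defensive.
Import Order.TTheory GRing.Theory Num.Theory.
Local Open Scope ring_scope.

(* Items are natural numbers; a sequence S of distinct items from {1..N}
   is encoded (0-based) as S : seq nat with uniq S and all items < N.
   Positions are 0-based: I(l+1) = nth 0%N S l. *)
Definition valid_seq (N : nat) (S : seq nat) : bool :=
  uniq S && all (fun i => (i < N)%N) S.

Definition EU {R : realFieldType} (r : nat -> R) (c : R)
  (S : seq nat) (u : nat -> R) (q : R) : R :=
  \sum_(l < size S)
     r (nth 0%N S l) * u (nth 0%N S l) * q ^+ l
       * \prod_(k < l) (1 - u (nth 0%N S k))
  - c * \sum_(k < size S)
          q ^+ k * (1 - q) * \prod_(j < k.+1) (1 - u (nth 0%N S j)).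

(* Main.v *)
Require Import Defs.
From mathcomp Require Import all_boot all_order all_algebra ring lra.
Import Order.TTheory GRing.Theory Num.Theory.
Local Open Scope ring_scope.

Lemma EU_cons (R : realFieldType) (r : nat -> R) c i S u q :
  EU r c (i::S) u q = r i * u i - c*(1-q)*(1-u i) + q*(1-u i)*EU r c S u q.
Proof.
rewrite /EU /= big_ord_recl [X in _ - c * X]big_ord_recl /= !big_ord0 big_ord_recl big_ord0 /=.
rewrite (eq_bigr (fun l : 'I_(size S) => q * (1 - u i) * (r (nth 0%N S l) * u (nth 0%N S l) * q ^+ l *
      \prod_(k < l) (1 - u (nth 0%N S k))))); last first.
  move=> l _; rewrite /bump /= add1n add0n big_ord_recl /= exprS; ring.
rewrite [X in _ - c * (_ + X)](eq_bigr (fun l : 'I_(size S) => q * (1 - u i) * (q ^+ l * (1 - q) * \prod_(j < l.+1) (1 - u (nth 0%N S j))))); last first.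
  move=> l _; rewrite /bump /= add1n big_ord_recl /= exprS; ring.
rewrite -!mulr_sumr expr0; ring.
Qed.

Lemma step_bound (R : realFieldType) (r c u q A : R) :
  0 <= r <= 1 -> 0 <= c <= 1 -> 0 <= u <= 1 -> 0 <= q <= 1 -> `|A| <= 1 ->
  `| r * u - c*(1-q)*(1-u) + q*(1-u)*A | <= 1.
Proof.
move=> /andP[r0 r1] /andP[c0 c1] /andP[u0 u1] /andP[q0 q1].
rewrite ler_norml => /andP[A0 A1].
have h1 : 0 <= 1 - u by lra.
have h2 : 0 <= 1 - q by lra.
have h3 : 0 <= q * (1 - u) by exact: mulr_ge0.
have h4 : q*(1-u)*A <= q*(1-u) by rewrite -{2}(mulr1 (q*(1-u))); exact: ler_wpM2l.
have h5 : - (q*(1-u)) <= q*(1-u)*A by rewrite -mulrN1 ler_wpM2l // -lerN2 opprK.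
have h6 : r * u <= u by rewrite -{2}(mul1r u); exact: ler_wpM2r.
have h7 : 0 <= r * u by exact: mulr_ge0.
have h8 : 0 <= (1-q)*(1-u) by exact: mulr_ge0.
have h9 : c*(1-q)*(1-u) <= (1-q)*(1-u) by rewrite -mulrA -{2}(mul1r ((1-q)*(1-u))); exact: ler_wpM2r.
have h10 : 0 <= c*(1-q)*(1-u) by rewrite -mulrA; exact: mulr_ge0.
have h11 : q * (1-u) + (1-q)*(1-u) = 1 - u by ring.
rewrite ler_norml; apply/andP; split; lra.
Qed.

Lemma step_diff (R : realFieldType) (r c u q u' q' A B D : R) :
  0 <= r <= 1 -> 0 <= c <= 1 -> 0 <= u <= 1 -> 0 <= q <= 1 ->
  0 <= u' <= 1 -> 0 <= q' <= 1 -> `|B| <= 1 -> `|A - B| <= D ->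
  `| (r * u - c*(1-q)*(1-u) + q*(1-u)*A) - (r * u' - c*(1-q')*(1-u') + q'*(1-u')*B) |
   <= 2 * `|u - u'| + 2 * `|q - q'| + D.
Proof.
move=> /andP[r0 r1] /andP[c0 c1] /andP[u0 u1] /andP[q0 q1] /andP[u0' u1'] /andP[q0' q1'] hB hD.
have -> : (r * u - c*(1-q)*(1-u) + q*(1-u)*A) - (r * u' - c*(1-q')*(1-u') + q'*(1-u')*B)
  = q*(1-u)*(A-B) + (u-u')*(r + c*(1-q) - q*B) + (q-q')*(c*(1-u') + (1-u')*B) by ring.
move: hB; rewrite ler_norml => /andP[B0 B1].
have e1 : `|q*(1-u)*(A-B)| <= D.
  rewrite normrM; apply: le_trans hD; rewrite -{2}(mul1r `|A-B|); apply: ler_wpM2r => //.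
  rewrite ger0_norm; last by apply: mulr_ge0; lra.
  have : q * (1-u) <= 1 * 1 by apply: ler_pM; lra.
  by rewrite mulr1.
have hqB1 : q*B <= q by rewrite -{2}(mulr1 q); exact: ler_wpM2l.
have hqB2 : -q <= q*B by rewrite -mulrN1 ler_wpM2l.
have hc1 : 0 <= c*(1-q) by apply: mulr_ge0; lra.
have hc2 : c*(1-q) <= 1-q by rewrite -{2}(mul1r (1-q)); apply: ler_wpM2r; lra.
have e2 : `|(u-u')*(r + c*(1-q) - q*B)| <= 2 * `|u-u'|.
  rewrite normrM mulrC; apply: ler_wpM2r => //; rewrite ler_norml; apply/andP; split; lra.
have hB1 : (1-u')*B <= 1-u' by rewrite -{2}(mulr1 (1-u')); apply: ler_wpM2l; lra.
have hB2 : -(1-u') <= (1-u')*B by rewrite -(mulrN1 (1-u')); apply: ler_wpM2l; lra.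
have hd1 : 0 <= c*(1-u') by apply: mulr_ge0; lra.
have hd2 : c*(1-u') <= 1-u' by rewrite -{2}(mul1r (1-u')); apply: ler_wpM2r; lra.
have e3 : `|(q-q')*(c*(1-u') + (1-u')*B)| <= 2 * `|q-q'|.
  rewrite normrM mulrC; apply: ler_wpM2r => //; rewrite ler_norml; apply/andP; split; lra.
apply: le_trans (ler_normD _ _) _.
apply: le_trans (lerD (ler_normD _ _) (lexx _)) _.
lra.
Qed.

Lemma EU_abs (R : realFieldType) (r : nat -> R) c S u q :
  (forall i, i \in S -> 0 <= r i <= 1) -> 0 <= c <= 1 ->
  (forall i, i \in S -> 0 <= u i <= 1) -> 0 <= q <= 1 ->
  `|EU r c S u q| <= 1.
Proof.
move=> hr hc hu hq; elim: S hr hu => [|i S IH] hr hu.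
  by rewrite /EU !big_ord0 mulr0 subr0 normr0.
rewrite EU_cons; apply: step_bound => //.
- by apply: hr; rewrite inE eqxx.
- by apply: hu; rewrite inE eqxx.
- apply: IH => j hj; [apply: hr | apply: hu]; by rewrite inE hj orbT.
Qed.

Lemma EU_diff (R : realFieldType) (r : nat -> R) c S v w qv qw :
  (forall i, i \in S -> 0 <= r i <= 1) -> 0 <= c <= 1 ->
  (forall i, i \in S -> 0 <= v i <= 1) -> (forall i, i \in S -> 0 <= w i <= 1) ->
  0 <= qv <= 1 -> 0 <= qw <= 1 ->
  `|EU r c S v qv - EU r c S w qw| <= \sum_(i <- S) (2 * `|v i - w i| + 2 * `|qv - qw|).
Proof.
move=> hr hc hv hw hqv hqw; elim: S hr hv hw => [|i S IH] hr hv hw.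
  by rewrite /EU !big_ord0 mulr0 subr0 subrr normr0 big_nil.
have hr' : forall j, j \in S -> 0 <= r j <= 1 by move=> j hj; apply: hr; rewrite inE hj orbT.
have hv' : forall j, j \in S -> 0 <= v j <= 1 by move=> j hj; apply: hv; rewrite inE hj orbT.
have hw' : forall j, j \in S -> 0 <= w j <= 1 by move=> j hj; apply: hw; rewrite inE hj orbT.
rewrite !EU_cons big_cons; apply: step_diff => //.
- by apply: hr; rewrite inE eqxx.
- by apply: hv; rewrite inE eqxx.
- by apply: hw; rewrite inE eqxx.
- exact: EU_abs.
- exact: IH.
Qed.

Theorem lemma4 (R : realFieldType) (N : nat) (r : nat -> R) (c : R)
  (v w : nat -> R) (qv qw : R) (Sv : seq nat) :
  (forall i, (i < N)%N -> 0 <= r i <= 1) ->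
  0 <= c <= 1 ->
  (forall i, (i < N)%N -> 0 <= v i <= 1) ->
  (forall i, (i < N)%N -> 0 <= w i <= 1) ->
  0 <= qv <= 1 -> 0 <= qw <= 1 ->
  valid_seq N Sv ->
  (forall S, valid_seq N S -> EU r c S v qv <= EU r c Sv v qv) ->
  `| EU r c Sv v qv - EU r c Sv w qw |
    <= \sum_(i <- Sv) (2 * `|v i - w i| + (N.+1)%:R * `|qv - qw|).
Proof.
move=> hr hc hv hw hqv hqw /andP[_ /allP hall] _.
have lt i : i \in Sv -> (i < N)%N by move=> hi; exact: hall.
apply: le_trans (@EU_diff R r c Sv v w qv qw _ hc _ _ hqv hqw) _.
- by move=> i /lt; apply: hr.
- by move=> i /lt; apply: hv.
- by move=> i /lt; apply: hw.
rewrite big_seq_cond [X in _ <= X]big_seq_cond; apply: ler_sum => i /andP[hi _].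
apply: lerD; first exact: lexx.
apply: ler_wpM2r; first exact: normr_ge0.
have hN : (1 <= N)%N by have := lt i hi; case: (N).
have -> : (2 : R) = 2%:R by [].
rewrite ler_nat; exact: hN.
Qed.
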